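(* Let $R$ be a Dedekind domain of characteristic $p>0$ with field of fractions $K$. Let $H_1$ and $H_2$ be primitively generated $R$-Hopf algebras with Dieudonné modules $M_1=\mathrm{Prim}(H_1)$ and $M_2=\mathrm{Prim}(H_2)$, and let $f:M_1\to M_2$ be an $R[F]$-module homomorphism. Let $D_*(f):H_1\to H_2$ denote the $R$-Hopf algebra homomorphism corresponding to $f$ under the Dieudonné equivalence (the unique Hopf algebra homomorphism whose restriction to primitive elements is $f$). If the induced $K[F]$-module map $K\otimes_R f: KM_1\to KM_2$ is an isomorphism, then $D_*(f)(H_1)$ and $H_2$ are both $R$-Hopf orders in $KH_2$.
   Context: All Hopf algebras are commutative, cocommutative, finitely generated projective, of $p$-power rank. For an $\mathbb{F}_p$-algebra $S$ and an $S$-Hopf algebra $H$ with comultiplication $\Delta$, $t\in H$ is primitive if $\Delta(t)=t\otimes 1+1\otimes t$; $\mathrm{Prim}(H)$ is the module of primitives and $H$ is primitively generated if generated as an algebra by $\mathrm{Prim}(H)$. $S[F]$ is the noncommutative polynomial ring with $Fa=a^pF$. The Dieudonné module of a primitively generated $S$-Hopf algebra $H$ is $\mathrm{Prim}(H)$ with $F$ acting by $t\mapsto t^p$; this gives an equivalence between primitively generated $S$-Hopf algebras and finite $S[F]$-modules free over $S$. For a $K$-Hopf algebra $H$, an $R$-Hopf order in $H$ is a finitely generated projective $R$-submodule $H_0\subseteq H$ which is an $R$-Hopf algebra under the operations inherited from $H$ and satisfies $KH_0=H$. *)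

(* Defs.v *)
From HB Require Import structures.
From mathcomp Require Import all_boot all_order all_algebra.
Set Implicit Arguments. Unset Strict Implicit. Unset Printing Implicit Defensive.
Import Order.TTheory GRing.Theory Num.Theory.
Local Open Scope ring_scope.

Section Defs.
Variable K : fieldType.

Definition subring (R : K -> Prop) :=
  [/\ R 0, R 1, (forall a b, R a -> R b -> R (a - b)),
      (forall a b, R a -> R b -> R (a + b)) & (forall a b, R a -> R b -> R (a * b))].

Definition frac_field (R : K -> Prop) :=
  forall x, exists a b, [/\ R a, R b, b != 0 & x = a / b].

Definition ideal (R : K -> Prop) (I : K -> Prop) :=
  [/\ forall x, I x -> R x, I 0, (forall x y, I x -> I y -> I (x + y))
    & (forall r x, R r -> I x -> I (r * x))].

Definition rgen (R : K -> Prop) (s : seq K) (x : K) :=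
  exists r : 'I_(size s) -> K, (forall i, R (r i)) /\ x = \sum_(i < size s) r i * s`_i.

Definition noetherian (R : K -> Prop) :=
  forall I, ideal R I ->
    exists s : seq K, (forall y, y \in s -> I y) /\ (forall x, I x -> rgen R s x).

Definition integrally_closed (R : K -> Prop) :=
  forall (q : {poly K}) (x : K),
    q \is monic -> (forall i, R q`_i) -> root q x -> R x.

Definition prime_ideal (R : K -> Prop) (I : K -> Prop) :=
  [/\ ideal R I, ~ I 1 & forall a b, R a -> R b -> I (a * b) -> I a \/ I b].

Definition maximal_ideal (R : K -> Prop) (I : K -> Prop) :=
  [/\ ideal R I, ~ I 1 &
      forall J, ideal R J -> (forall x, I x -> J x) -> J 1 \/ (forall x, J x -> I x)].

Definition dedekind (R : K -> Prop) :=
  [/\ subring R, noetherian R, integrally_closed R &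
      forall P, prime_ideal R P -> (exists x, P x /\ x != 0) -> maximal_ideal R P].

(* basis e_i = delta_mx 0 i; K^n (x) K^n is identified with 'M_n via
   x (x) y := x^T *m y. *)
Record hopf_data (n : nat) := HopfData {
  hmu : 'I_n -> 'I_n -> 'rV[K]_n;
  hone : 'rV[K]_n;
  hdel : 'I_n -> 'M[K]_n;           (* Delta e_k = sum_(i,j) hdel k i j e_i (x) e_j *)
  heps : 'I_n -> K;
  hant : 'M[K]_n
}.

Variable n : nat.
Implicit Types (h : hopf_data n) (x y z : 'rV[K]_n).

Definition ev (i : 'I_n) : 'rV[K]_n := delta_mx 0 i.
Definition tens x y : 'M[K]_n := x^T *m y.
Definition mulv h x y : 'rV[K]_n :=
  \sum_(i < n) \sum_(j < n) (x 0 i * y 0 j) *: hmu h i j.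
Definition delv h x : 'M[K]_n := \sum_(k < n) x 0 k *: hdel h k.
Definition epsv h x : K := \sum_(k < n) x 0 k * heps h k.
Definition antv h x : 'rV[K]_n := x *m hant h.
Definition tmul h (s t : 'M[K]_n) : 'M[K]_n :=
  \sum_(a < n) \sum_(b < n) \sum_(c < n) \sum_(d < n)
     (s a b * t c d) *: tens (hmu h a c) (hmu h b d).
Definition powv h x (k : nat) : 'rV[K]_n := iter k (mulv h x) (hone h).

(* commutative, cocommutative K-Hopf algebra *)
Definition is_hopf h :=
  [/\ (forall x y z, mulv h (mulv h x y) z = mulv h x (mulv h y z)),
      (forall x y, mulv h x y = mulv h y x),
      (forall x, mulv h (hone h) x = x),
      (forall k a b c : 'I_n,
         \sum_(i < n) hdel h k i c * hdel h i a b
         = \sum_(j < n) hdel h k a j * hdel h j b c) &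
      (forall k, (hdel h k)^T = hdel h k) ] /\
  [/\ (forall k j : 'I_n, \sum_(i < n) heps h i * hdel h k i j = (k == j)%:R
                      /\ \sum_(i < n) heps h i * hdel h k j i = (k == j)%:R),
      (forall x y, delv h (mulv h x y) = tmul h (delv h x) (delv h y)),
      delv h (hone h) = tens (hone h) (hone h),
      (forall x y, epsv h (mulv h x y) = epsv h x * epsv h y) /\ epsv h (hone h) = 1 &
      (forall k, \sum_(i < n) \sum_(j < n) hdel h k i j *: mulv h (antv h (ev i)) (ev j)
                 = heps h k *: hone h
              /\ \sum_(i < n) \sum_(j < n) hdel h k i j *: mulv h (ev i) (antv h (ev j))
                 = heps h k *: hone h) ].

Definition kspan (L : 'rV[K]_n -> Prop) (v : 'rV[K]_n) :=
  exists s : seq (K * 'rV[K]_n),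
    (forall q, q \in s -> L q.2) /\ v = \sum_(q <- s) q.1 *: q.2.

(* image of L (x)_R L in K^n (x)_K K^n *)
Definition rtens (R : K -> Prop) (L : 'rV[K]_n -> Prop) (t : 'M[K]_n) :=
  exists s : seq (K * ('rV[K]_n * 'rV[K]_n)),
    (forall q, q \in s -> [/\ R q.1, L q.2.1 & L q.2.2]) /\
    t = \sum_(q <- s) q.1 *: tens q.2.1 q.2.2.

Definition rsubmod (R : K -> Prop) (L : 'rV[K]_n -> Prop) :=
  [/\ L 0, (forall x y, L x -> L y -> L (x + y))
    & (forall r x, R r -> L x -> L (r *: x))].

Definition fgproj (R : K -> Prop) (L : 'rV[K]_n -> Prop) :=
  (exists s : seq 'rV[K]_n, (forall x, x \in s -> L x) /\
     forall x, L x -> exists r : 'I_(size s) -> K,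
        (forall i, R (r i)) /\ x = \sum_(i < size s) r i *: s`_i) /\
  exists (m : nat) (a : 'rV[K]_n -> 'rV[K]_m) (b : 'rV[K]_m -> 'rV[K]_n),
    [/\ (forall x, L x -> forall i, R (a x 0 i)),
        (forall x y, L x -> L y -> a (x + y) = a x + a y),
        (forall r x, R r -> L x -> a (r *: x) = r *: a x) &
        (forall u : 'rV[K]_m, (forall i, R (u 0 i)) -> L (b u))] /\
    [/\
        (forall u w : 'rV[K]_m, (forall i, R (u 0 i)) -> (forall i, R (w 0 i)) -> b (u + w) = b u + b w),
        (forall r (u : 'rV[K]_m), R r -> (forall i, R (u 0 i)) -> b (r *: u) = r *: b u) &
        (forall x, L x -> b (a x) = x)].

Definition hopf_order (R : K -> Prop) h (L : 'rV[K]_n -> Prop) :=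
  [/\ rsubmod R L, fgproj R L, (forall v, kspan L v),
      L (hone h) & (forall x y, L x -> L y -> L (mulv h x y))] /\
  [/\ (forall x, L x -> R (epsv h x)),
      (forall x, L x -> L (antv h x)) &
      (forall x, L x -> rtens R L (delv h x))].

Definition prim h (L : 'rV[K]_n -> Prop) (t : 'rV[K]_n) :=
  L t /\ delv h t = tens t (hone h) + tens (hone h) t.

Definition rsubalg (R : K -> Prop) h (S : 'rV[K]_n -> Prop) :=
  [/\ rsubmod R S, S (hone h) & (forall x y, S x -> S y -> S (mulv h x y))].

Definition prim_gen (R : K -> Prop) h (L : 'rV[K]_n -> Prop) :=
  forall S, rsubalg R h S -> (forall t, prim h L t -> S t) -> forall x, L x -> S x.

End Defs.

Section Homs.
Variable K : fieldType.
Variables (n1 n2 : nat) (h1 : hopf_data K n1) (h2 : hopf_data K n2).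
Variables (L1 : 'rV[K]_n1 -> Prop) (L2 : 'rV[K]_n2 -> Prop).

(* R-Hopf algebra homomorphism L1 -> L2, given by (the K-linear extension)
   x |-> x *m A *)
Definition hopf_hom (R : K -> Prop) (A : 'M[K]_(n1, n2)) :=
  [/\ (forall x, L1 x -> L2 (x *m A)),
      (forall x y, L1 x -> L1 y -> mulv h2 (x *m A) (y *m A) = mulv h1 x y *m A),
      hone h1 *m A = hone h2,
      (forall x, L1 x -> delv h2 (x *m A) = A^T *m delv h1 x *m A) &
      (forall x, L1 x -> epsv h2 (x *m A) = epsv h1 x)].

(* f : Prim(L1) -> Prim(L2) is an R[F]-module homomorphism,
   with F t = t^p *)
Definition RF_hom (R : K -> Prop) (p : nat) (f : 'rV[K]_n1 -> 'rV[K]_n2) :=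
  [/\ (forall t, prim h1 L1 t -> prim h2 L2 (f t)),
      (forall s t, prim h1 L1 s -> prim h1 L1 t -> f (s + t) = f s + f t),
      (forall r t, R r -> prim h1 L1 t -> f (r *: t) = r *: f t) &
      (forall t, prim h1 L1 t -> f (powv h1 t p) = powv h2 (f t) p)].

(* K (x)_R f : K M1 -> K M2 is an isomorphism (K M_i identified with the
   K-span of M_i inside K^n_i) *)
Definition kext_iso (f : 'rV[K]_n1 -> 'rV[K]_n2) :=
  (forall s : seq (K * 'rV[K]_n1), (forall q, q \in s -> prim h1 L1 q.2) ->
     \sum_(q <- s) q.1 *: f q.2 = 0 -> \sum_(q <- s) q.1 *: q.2 = 0) /\
  (forall w, kspan (prim h2 L2) w ->
     exists s : seq (K * 'rV[K]_n1), (forall q, q \in s -> prim h1 L1 q.2) /\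
        w = \sum_(q <- s) q.1 *: f q.2).

End Homs.

(* Main.v *)
Require Import Defs.
From HB Require Import structures.
From mathcomp Require Import all_boot all_order all_algebra.
Set Implicit Arguments. Unset Strict Implicit. Unset Printing Implicit Defensive.
Import Order.TTheory GRing.Theory Num.Theory.
Local Open Scope ring_scope.

Section Gen.
Variable K : fieldType.
Variable n : nat.
Variable h : hopf_data K n.
Implicit Types (x y z : 'rV[K]_n) (c : K).

Lemma mulvDl x y z : mulv h (x + y) z = mulv h x z + mulv h y z.
Proof.
rewrite /mulv -big_split; apply: eq_bigr => i _; rewrite -big_split.
by apply: eq_bigr => j _; rewrite !mxE mulrDl scalerDl.
Qed.
Lemma mulvDr x y z : mulv h z (x + y) = mulv h z x + mulv h z y.
Proof.
rewrite /mulv -big_split; apply: eq_bigr => i _; rewrite -big_split.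
by apply: eq_bigr => j _; rewrite !mxE mulrDr scalerDl.
Qed.
Lemma mulvZl c x z : mulv h (c *: x) z = c *: mulv h x z.
Proof.
rewrite /mulv scaler_sumr; apply: eq_bigr => i _; rewrite scaler_sumr.
by apply: eq_bigr => j _; rewrite !mxE scalerA mulrA.
Qed.
Lemma mulvZr c x z : mulv h z (c *: x) = c *: mulv h z x.
Proof.
rewrite /mulv scaler_sumr; apply: eq_bigr => i _; rewrite scaler_sumr.
by apply: eq_bigr => j _; rewrite !mxE scalerA mulrCA mulrA.
Qed.
Lemma mulv0l z : mulv h 0 z = 0.
Proof.
have -> : (0 : 'rV[K]_n) = (0:K) *: (0 : 'rV[K]_n) by rewrite scale0r.
by rewrite mulvZl !scale0r.
Qed.
Lemma mulv0r z : mulv h z 0 = 0.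
Proof.
have -> : (0 : 'rV[K]_n) = (0:K) *: (0 : 'rV[K]_n) by rewrite scale0r.
by rewrite mulvZr !scale0r.
Qed.

Lemma delvD x y : delv h (x + y) = delv h x + delv h y.
Proof. by rewrite /delv -big_split; apply: eq_bigr => i _; rewrite mxE scalerDl. Qed.
Lemma delvZ c x : delv h (c *: x) = c *: delv h x.
Proof. by rewrite /delv scaler_sumr; apply: eq_bigr => i _; rewrite mxE scalerA. Qed.
Lemma epsvD x y : epsv h (x + y) = epsv h x + epsv h y.
Proof. by rewrite /epsv -big_split; apply: eq_bigr => i _; rewrite mxE mulrDl. Qed.
Lemma epsvZ c x : epsv h (c *: x) = c * epsv h x.
Proof. by rewrite /epsv mulr_sumr; apply: eq_bigr => i _; rewrite mxE mulrA. Qed.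
Lemma antvD x y : antv h (x + y) = antv h x + antv h y.
Proof. by rewrite /antv mulmxDl. Qed.
Lemma antvZ c x : antv h (c *: x) = c *: antv h x.
Proof. by rewrite /antv scalemxAl. Qed.

Lemma tensDl x y z : tens (x + y) z = tens x z + tens y z.
Proof. by rewrite /tens linearD mulmxDl. Qed.
Lemma tensDr x y z : tens z (x + y) = tens z x + tens z y.
Proof. by rewrite /tens mulmxDr. Qed.
Lemma tensZl c x z : tens (c *: x) z = c *: tens x z.
Proof. by rewrite /tens linearZ /= scalemxAl. Qed.
Lemma tensZr c x z : tens z (c *: x) = c *: tens z x.
Proof. by rewrite /tens scalemxAr. Qed.
Lemma tensE x y i j : tens x y i j = x 0 i * y 0 j.
Proof. by rewrite /tens !mxE big_ord1 !mxE. Qed.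

Lemma tmulDl (s t u : 'M[K]_n) : tmul h (s + t) u = tmul h s u + tmul h t u.
Proof.
rewrite /tmul -big_split; apply: eq_bigr => a _; rewrite -big_split.
apply: eq_bigr => b _; rewrite -big_split; apply: eq_bigr => c _; rewrite -big_split.
by apply: eq_bigr => d _; rewrite !mxE mulrDl scalerDl.
Qed.
Lemma tmulDr (s t u : 'M[K]_n) : tmul h u (s + t) = tmul h u s + tmul h u t.
Proof.
rewrite /tmul -big_split; apply: eq_bigr => a _; rewrite -big_split.
apply: eq_bigr => b _; rewrite -big_split; apply: eq_bigr => c _; rewrite -big_split.
by apply: eq_bigr => d _; rewrite !mxE mulrDr scalerDl.
Qed.
Lemma tmulZl k (s u : 'M[K]_n) : tmul h (k *: s) u = k *: tmul h s u.
Proof.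
rewrite /tmul scaler_sumr; apply: eq_bigr => a _; rewrite scaler_sumr.
apply: eq_bigr => b _; rewrite scaler_sumr; apply: eq_bigr => c _; rewrite scaler_sumr.
by apply: eq_bigr => d _; rewrite !mxE scalerA mulrA.
Qed.
Lemma tmulZr k (s u : 'M[K]_n) : tmul h u (k *: s) = k *: tmul h u s.
Proof.
rewrite /tmul scaler_sumr; apply: eq_bigr => a _; rewrite scaler_sumr.
apply: eq_bigr => b _; rewrite scaler_sumr; apply: eq_bigr => c _; rewrite scaler_sumr.
by apply: eq_bigr => d _; rewrite !mxE scalerA mulrCA mulrA.
Qed.

Lemma tens_suml (I : Type) (r : seq I) (P : pred I) (F : I -> 'rV[K]_n) y :
  tens (\sum_(i <- r | P i) F i) y = \sum_(i <- r | P i) tens (F i) y.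
Proof. by rewrite /tens linear_sum /= mulmx_suml. Qed.
Lemma tens_sumr (I : Type) (r : seq I) (P : pred I) (F : I -> 'rV[K]_n) y :
  tens y (\sum_(i <- r | P i) F i) = \sum_(i <- r | P i) tens y (F i).
Proof. by rewrite /tens mulmx_sumr. Qed.

Lemma tmul_tens (a b c d : 'rV[K]_n) :
  tmul h (tens a b) (tens c d) = tens (mulv h a c) (mulv h b d).
Proof.
rewrite /mulv tens_suml.
transitivity (\sum_(i < n) \sum_(k < n) \sum_(j < n) \sum_(l < n)
   ((a 0 i * c 0 k) * (b 0 j * d 0 l)) *: tens (hmu h i k) (hmu h j l)).
  rewrite /tmul; apply: eq_bigr => i _; rewrite exchange_big /=.
  apply: eq_bigr => k _; apply: eq_bigr => j _; apply: eq_bigr => l _.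
  by rewrite !tensE; congr (_ *: _); rewrite mulrACA.
apply: eq_bigr => i _; rewrite tens_suml; apply: eq_bigr => k _.
rewrite tensZl tens_sumr scaler_sumr; apply: eq_bigr => j _.
rewrite tens_sumr scaler_sumr; apply: eq_bigr => l _.
by rewrite tensZr scalerA.
Qed.

Lemma evE (i k : 'I_n) : ev K i 0 k = (i == k)%:R.
Proof. by rewrite /ev mxE eqxx eq_sym. Qed.

Lemma sum_ev (V : lmodType K) (i : 'I_n) (F : 'I_n -> V) :
  \sum_(k < n) ev K i 0 k *: F k = F i.
Proof.
rewrite (bigD1 i) //= big1 ?addr0 ?evE ?eqxx ?scale1r // => k /negbTE ki.
by rewrite evE eq_sym ki scale0r.
Qed.

Lemma delv_ev i : delv h (ev K i) = hdel h i.
Proof. by rewrite /delv sum_ev. Qed.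
Lemma epsv_ev i : epsv h (ev K i) = heps h i.
Proof.
rewrite /epsv (bigD1 i) //= big1 ?addr0 ?evE ?eqxx ?mul1r // => k /negbTE ki.
by rewrite evE eq_sym ki mul0r.
Qed.

Lemma row_ev x : x = \sum_(k < n) x 0 k *: ev K k.
Proof. exact: row_sum_delta. Qed.

Lemma tens_ev (i j : 'I_n) : tens (ev K i) (ev K j) = delta_mx i j.
Proof. by rewrite /tens /ev trmx_delta mul_delta_mx. Qed.

Lemma mx_ev (M : 'M[K]_n) : M = \sum_(i < n) \sum_(j < n) M i j *: tens (ev K i) (ev K j).
Proof.
rewrite {1}(matrix_sum_delta M); apply: eq_bigr => i _; apply: eq_bigr => j _.
by rewrite tens_ev.
Qed.

End Gen.

Section Gen2.
Variable K : fieldType.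
Variable n : nat.
Variable h : hopf_data K n.
Implicit Types (x y z : 'rV[K]_n) (c : K).

Definition ksub (V : lmodType K) (P : V -> Prop) :=
  [/\ P 0, (forall u v : V, P u -> P v -> P (u + v)) & (forall (a : K) (u : V), P u -> P (a *: u))].

Lemma ksub_sum (V : lmodType K) (P : V -> Prop) (I : eqType) (r : seq I) (F : I -> V) :
  ksub P -> (forall i, i \in r -> P (F i)) -> P (\sum_(i <- r) F i).
Proof.
move=> [P0 PD PZ]; elim: r => [|a r IH] Hr; first by rewrite big_nil.
rewrite big_cons; apply: (PD); first by apply: Hr; rewrite inE eqxx.
by apply: IH => i ir; apply: Hr; rewrite inE ir orbT.
Qed.

Lemma kspan_ind (G P : 'rV[K]_n -> Prop) v :
  ksub P -> (forall x, G x -> P x) -> kspan G v -> P v.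
Proof.
move=> HP HG [s [Hs ->]]; apply: ksub_sum => // q qs.
by case: HP => _ _ PZ; apply: (PZ); apply: HG; apply: Hs.
Qed.

Lemma kspan_gen (G : 'rV[K]_n -> Prop) x : G x -> kspan G x.
Proof.
move=> Gx; exists [:: (1, x)]; split; first by move=> q; rewrite inE => /eqP ->.
by rewrite big_cons big_nil scale1r addr0.
Qed.

Lemma kspan_sub (G : 'rV[K]_n -> Prop) : ksub (kspan G).
Proof.
split.
- by exists [::]; split => //; rewrite big_nil.
- move=> x y [s [Hs ->]] [t [Ht ->]]; exists (s ++ t); split; last by rewrite big_cat.
  by move=> q; rewrite mem_cat => /orP [] ?; [apply: Hs | apply: Ht].
- move=> c x [s [Hs ->]]; exists [seq (c * q.1, q.2) | q <- s]; split.
    by move=> q /mapP [q' q's ->]; exact: (Hs q' q's).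
  by rewrite big_map scaler_sumr; apply: eq_bigr => q _; rewrite scalerA.
Qed.

Definition primK t := delv h t = tens t (hone h) + tens (hone h) t.
Definition dbar x := delv h x - tens x (hone h) - tens (hone h) x.

Lemma dbarD x y : dbar (x + y) = dbar x + dbar y.
Proof.
rewrite /dbar delvD tensDl tensDr.
rewrite !opprD !addrA; congr (_ + _); rewrite -!addrA; congr (_ + _).
by rewrite addrC -!addrA; congr (_ + _); rewrite addrC -!addrA; congr (_ + _).
Qed.
Lemma dbarZ c x : dbar (c *: x) = c *: dbar x.
Proof. by rewrite /dbar delvZ tensZl tensZr !scalerBr. Qed.

Definition ktens (F : 'rV[K]_n -> Prop) (M : 'M[K]_n) :=
  exists s : seq (K * ('rV[K]_n * 'rV[K]_n)),
    (forall q, q \in s -> F q.2.1 /\ F q.2.2) /\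
    M = \sum_(q <- s) q.1 *: tens q.2.1 q.2.2.

Lemma ktens_sub F : ksub (ktens F).
Proof.
split.
- by exists [::]; split => //; rewrite big_nil.
- move=> x y [s [Hs ->]] [t [Ht ->]]; exists (s ++ t); split; last by rewrite big_cat.
  by move=> q; rewrite mem_cat => /orP [] ?; [apply: Hs | apply: Ht].
- move=> c x [s [Hs ->]]; exists [seq (c * q.1, q.2) | q <- s]; split.
    by move=> q /mapP [q' q's ->]; exact: (Hs q' q's).
  by rewrite big_map scaler_sumr; apply: eq_bigr => q _; rewrite scalerA.
Qed.

Lemma ktens_gen (F : 'rV[K]_n -> Prop) u v : F u -> F v -> ktens F (tens u v).
Proof.
move=> Fu Fv; exists [:: (1, (u, v))]; split; first by move=> q; rewrite inE => /eqP ->.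
by rewrite big_cons big_nil scale1r addr0.
Qed.

Lemma ktens_mono (F G : 'rV[K]_n -> Prop) M :
  (forall x, F x -> G x) -> ktens F M -> ktens G M.
Proof.
move=> FG [s [Hs ->]]; exists s; split => // q qs.
by case: (Hs q qs) => ??; split; apply: FG.
Qed.

Lemma tmul_sumr (M : 'M[K]_n) (I : Type) (r : seq I) (F : I -> 'M[K]_n) :
  tmul h M (\sum_(i <- r) F i) = \sum_(i <- r) tmul h M (F i).
Proof.
apply: (big_morph (tmul h M)); first by move=> ??; rewrite tmulDr.
have -> : (0 : 'M[K]_n) = (0:K) *: (0 : 'M[K]_n) by rewrite scale0r.
by rewrite tmulZr !scale0r.
Qed.

Lemma tmul_ktens (F G : 'rV[K]_n -> Prop) a b M :
  (forall u, F u -> G (mulv h a u)) -> (forall u, F u -> G (mulv h b u)) ->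
  ktens F M -> ktens G (tmul h (tens a b) M).
Proof.
move=> Ha Hb [s [Hs ->]]; rewrite tmul_sumr; apply: ksub_sum; first exact: ktens_sub.
move=> q qs; rewrite tmulZr tmul_tens; case: (ktens_sub G) => _ _ PZ; apply: (PZ).
by case: (Hs q qs) => ??; apply: ktens_gen; [apply: Ha | apply: Hb].
Qed.

Hypothesis Hh : is_hopf h.

Lemma mul1v x : mulv h (hone h) x = x.
Proof. by case: Hh => [[_ _ H _ _] _]; apply: H. Qed.
Lemma mulv1 x : mulv h x (hone h) = x.
Proof. by case: Hh => [[_ C H _ _] _]; rewrite C H. Qed.
Lemma mulvA x y z : mulv h (mulv h x y) z = mulv h x (mulv h y z).
Proof. by case: Hh => [[A _ _ _ _] _]; apply: A. Qed.
Lemma delvM x y : delv h (mulv h x y) = tmul h (delv h x) (delv h y).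
Proof. by case: Hh => [_ [_ H _ _ _]]; apply: H. Qed.
Lemma delv1 : delv h (hone h) = tens (hone h) (hone h).
Proof. by case: Hh => [_ [_ _ H _ _]]. Qed.
Lemma epsv1 : epsv h (hone h) = 1.
Proof. by case: Hh => [_ [_ _ _ [_ H] _]]. Qed.

Lemma zmod_id3 (V : zmodType) (a b c d e f : V) :
  a + b + c + (d + e + f) - a - e = b + d + c + f.
Proof.
rewrite -!addrA 5!(addrCA a) addNKr (addrCA e) addrN addr0.
by rewrite (addrCA c).
Qed.

Lemma zmod_id2 (V : zmodType) (x a b : V) : x = a + b + (x - a - b).
Proof. by rewrite addrC -[x - a - b]addrA -opprD subrK. Qed.

Lemma dbarM t z : primK t ->
  dbar (mulv h t z) = tens t z + tens z t
     + tmul h (tens t (hone h)) (dbar z) + tmul h (tens (hone h) t) (dbar z).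
Proof.
move=> Pt; rewrite {1}/dbar delvM Pt.
have -> : delv h z = tens z (hone h) + tens (hone h) z + dbar z.
  exact: zmod_id2.
move: (dbar z) => D.
rewrite !tmulDl !tmulDr !tmul_tens !mul1v !mulv1.
exact: zmod_id3.
Qed.

Fixpoint Fsp (m : nat) : 'rV[K]_n -> Prop :=
  match m with
  | 0 => fun x => exists c, x = c *: hone h
  | m'.+1 => kspan (fun y => Fsp m' y \/
                     exists t z, [/\ primK t, Fsp m' z & y = mulv h t z])
  end.

Lemma Fsp_sub m : ksub (Fsp m).
Proof.
case: m => [|m] /=; last exact: kspan_sub.
split; first by exists 0; rewrite scale0r.
  by move=> x y [a ->] [b ->]; exists (a + b); rewrite scalerDl.
by move=> a x [b ->]; exists (a * b); rewrite scalerA.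
Qed.

Lemma Fsp_S m x : Fsp m x -> Fsp m.+1 x.
Proof. by move=> H; apply: kspan_gen; left. Qed.

Lemma Fsp_le m k x : (m <= k)%N -> Fsp m x -> Fsp k x.
Proof.
move=> /subnK <-; elim: (k - m)%N => [|j IH] // H.
by rewrite addSn; apply: Fsp_S; apply: IH.
Qed.

Lemma Fsp_one m : Fsp m (hone h).
Proof. by apply: (@Fsp_le 0) => //; exists 1; rewrite scale1r. Qed.

Lemma Fsp_prim m t : primK t -> Fsp m.+1 t.
Proof.
move=> Pt; apply: kspan_gen; right; exists t, (hone h); split => //.
  exact: Fsp_one.
by rewrite mulv1.
Qed.

Lemma Fsp_mul a b x y : Fsp a x -> Fsp b y -> Fsp (a + b) (mulv h x y).
Proof.
elim: a x y => [|a IH] x y /=.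
  by move=> [c ->] Hy; rewrite mulvZl mul1v; case: (Fsp_sub b) => _ _ PZ; apply: (PZ).
move=> Hx Hy; pose P u := Fsp (a + b).+1 (mulv h u y).
suff : P x by [].
apply: (kspan_ind _ _ Hx).
  split; rewrite /P.
  - rewrite mulv0l; by case: (Fsp_sub (a + b).+1).
  - by move=> u v Hu Hv; rewrite mulvDl; case: (Fsp_sub (a + b).+1) => _ PD _; apply: (PD).
  - by move=> c u Hu; rewrite mulvZl; case: (Fsp_sub (a + b).+1) => _ _ PZ; apply: (PZ).
move=> u [Hu | [t [z [Pt Hz ->]]]]; rewrite /P.
  by apply: Fsp_S; apply: IH.
rewrite mulvA; apply: kspan_gen; right; exists t, (mulv h z y); split => //.
exact: IH.
Qed.

Lemma dbar_Fsp m x : Fsp m.+1 x -> ktens (Fsp m) (dbar x).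
Proof.
elim: m x => [|m IH] x Hx.
  apply: (kspan_ind (P := fun u => ktens (Fsp 0) (dbar u)) _ _ Hx).
    split.
    - by rewrite -[0 : 'rV_n](scale0r 0) dbarZ scale0r; case: (ktens_sub (Fsp 0)).
    - by move=> u v Hu Hv; rewrite dbarD; case: (ktens_sub (Fsp 0)) => _ PD _; apply: (PD).
    - by move=> c u Hu; rewrite dbarZ; case: (ktens_sub (Fsp 0)) => _ _ PZ; apply: (PZ).
  move=> u [[c ->] | [t [z [Pt [c ->] ->]]]].
    rewrite dbarZ; case: (ktens_sub (Fsp 0)) => _ _ PZ; apply: (PZ).
    rewrite /dbar delv1 subrr sub0r -scaleN1r; apply: (PZ).
    by apply: ktens_gen; exact: Fsp_one.
  rewrite mulvZr mulv1 dbarZ; case: (ktens_sub (Fsp 0)) => K0 _ PZ; apply: (PZ).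
  by rewrite /dbar Pt (addrC (tens t _)) addrK subrr.
apply: (kspan_ind (P := fun u => ktens (Fsp m.+1) (dbar u)) _ _ Hx).
  split.
  - by rewrite -[0 : 'rV_n](scale0r 0) dbarZ scale0r; case: (ktens_sub (Fsp m.+1)).
  - by move=> u v Hu Hv; rewrite dbarD; case: (ktens_sub (Fsp m.+1)) => _ PD _; apply: (PD).
  - by move=> c u Hu; rewrite dbarZ; case: (ktens_sub (Fsp m.+1)) => _ _ PZ; apply: (PZ).
move=> u [Hu | [t [z [Pt Hz ->]]]].
  by apply: (ktens_mono (@Fsp_S m)); apply: IH.
have Hd := IH z Hz.
rewrite dbarM //; case: (ktens_sub (Fsp m.+1)) => _ PD _.
have Ht : Fsp m.+1 t by exact: Fsp_prim.
apply: (PD); [apply: (PD); [apply: (PD)|]|].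
- by apply: ktens_gen.
- by apply: ktens_gen.
- apply: tmul_ktens Hd => v Hv; last by rewrite mul1v; apply: Fsp_S.
  by rewrite -[m.+1]add1n; apply: Fsp_mul => //; apply: Fsp_prim.
- apply: tmul_ktens Hd => v Hv; first by rewrite mul1v; apply: Fsp_S.
  by rewrite -[m.+1]add1n; apply: Fsp_mul => //; apply: Fsp_prim.
Qed.

End Gen2.

Section Gen3.
Variable K : fieldType.
Variable n : nat.
Variable h : hopf_data K n.
Hypothesis Hh : is_hopf h.

Lemma delvE (x : 'rV[K]_n) i j : delv h x i j = \sum_(k < n) x 0 k * hdel h k i j.
Proof. by rewrite /delv summxE; apply: eq_bigr => k _; rewrite mxE. Qed.

Lemma delv_expand (V : lmodType K) (Y : 'I_n -> 'I_n -> V) (x : 'rV[K]_n) :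
  \sum_(i < n) \sum_(j < n) delv h x i j *: Y i j
  = \sum_(k < n) x 0 k *: (\sum_(i < n) \sum_(j < n) hdel h k i j *: Y i j).
Proof.
transitivity (\sum_(i < n) \sum_(k < n) \sum_(j < n) (x 0 k * hdel h k i j) *: Y i j).
  apply: eq_bigr => i _; rewrite exchange_big /=; apply: eq_bigr => j _.
  by rewrite delvE scaler_suml.
rewrite exchange_big /=; apply: eq_bigr => k _; rewrite scaler_sumr.
apply: eq_bigr => i _; rewrite scaler_sumr; apply: eq_bigr => j _.
by rewrite scalerA.
Qed.

Lemma anti_l (x : 'rV[K]_n) :
  \sum_(i < n) \sum_(j < n) delv h x i j *: mulv h (antv h (ev K i)) (ev K j)
  = epsv h x *: hone h.
Proof.
rewrite delv_expand /epsv scaler_suml; apply: eq_bigr => k _.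
case: Hh => [_ [_ _ _ _ H]]; rewrite (H k).1.
by rewrite scalerA.
Qed.

Lemma anti_r (x : 'rV[K]_n) :
  \sum_(i < n) \sum_(j < n) delv h x i j *: mulv h (ev K i) (antv h (ev K j))
  = epsv h x *: hone h.
Proof.
rewrite delv_expand /epsv scaler_suml; apply: eq_bigr => k _.
case: Hh => [_ [_ _ _ _ H]]; rewrite (H k).2.
by rewrite scalerA.
Qed.

Lemma mulv_suml (I : Type) (r : seq I) (F : I -> 'rV[K]_n) z :
  mulv h (\sum_(i <- r) F i) z = \sum_(i <- r) mulv h (F i) z.
Proof.
apply: (big_morph (fun u => mulv h u z)); first by move=> ??; rewrite mulvDl.
exact: mulv0l.
Qed.
Lemma mulv_sumr (I : Type) (r : seq I) (F : I -> 'rV[K]_n) z :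
  mulv h z (\sum_(i <- r) F i) = \sum_(i <- r) mulv h z (F i).
Proof.
apply: (big_morph (fun u => mulv h z u)); first by move=> ??; rewrite mulvDr.
exact: mulv0r.
Qed.

Lemma counit_r (k i : 'I_n) : \sum_(j < n) hdel h k i j * heps h j = (k == i)%:R.
Proof.
case: Hh => [_ [H _ _ _ _]]; rewrite -(H k i).2.
by apply: eq_bigr => j _; rewrite mulrC.
Qed.
Lemma counit_l (k j : 'I_n) : \sum_(i < n) hdel h k i j * heps h i = (k == j)%:R.
Proof.
case: Hh => [_ [H _ _ _ _]]; rewrite -(H k j).1.
by apply: eq_bigr => i _; rewrite mulrC.
Qed.

End Gen3.

Section Tens.
Variable K : fieldType.
Variables n1 n2 : nat.
Variable A : 'M[K]_(n1, n2).
Variable F : 'rV[K]_n1 -> Prop.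
Hypothesis HF : ksub F.
Hypothesis Hinj : forall x, F x -> x *m A = 0 -> x = 0.

Lemma ksub_mul k (U : 'M[K]_(k, n1)) (w : 'rV[K]_k) :
  (forall i, F (row i U)) -> F (w *m U).
Proof.
move=> HU; rewrite mulmx_sum_row; apply: ksub_sum => // i _.
by case: HF => _ _ PZ; apply: PZ.
Qed.

Lemma BA_free r (B : 'M[K]_(r, n1)) :
  row_free B -> (forall w, F (w *m B)) -> row_free (B *m A).
Proof.
move=> HB HwB; rewrite -kermx_eq0; apply/eqP/row_matrixP => i; rewrite row0.
set w := row i _.
have H0 : w *m (B *m A) = 0 by rewrite /w -row_mul mulmx_ker row0.
apply: (row_free_inj HB); rewrite mul0mx; apply: Hinj => //.
by rewrite -mulmxA.
Qed.

Lemma tens_inj M : ktens F M -> A^T *m M *m A = 0 -> M = 0.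
Proof.
move=> [s [Hs ->]] H0.
set vs := [seq q.2.1 | q <- s] ++ [seq q.2.2 | q <- s].
set U := \matrix_(i < size vs) nth 0 vs i.
have Fvs : forall x, x \in vs -> F x.
  move=> x; rewrite mem_cat => /orP [] /mapP [q qs ->]; by case: (Hs q qs).
have HU : forall i, F (row i U) by move=> i; rewrite rowK; apply: Fvs; apply: mem_nth.
have Hv : forall x, x \in vs -> (x <= U)%MS.
  move=> x xv; have Hi : (index x vs < size vs)%N by rewrite index_mem.
  have -> : x = row (Ordinal Hi) U by rewrite rowK /= nth_index.
  exact: row_sub.
set B := row_base U.
have HBU : (B <= U)%MS by rewrite /B eq_row_base.
have HB : forall w, F (w *m B).
  move=> w; rewrite -(mulmxKpV (submx_trans (submxMl w B) HBU)).
  exact: ksub_mul.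
have HBf : row_free B := row_base_free U.
have Hx : forall x, x \in vs -> x = x *m pinvmx B *m B.
  by move=> x xv; rewrite mulmxKpV // /B eq_row_base; apply: Hv.
clearbody B.
case/row_freeP: (BA_free HBf HB) => G HG.
set P := pinvmx B.
set N := \sum_(q <- s) q.1 *: ((q.2.1 *m P)^T *m (q.2.2 *m P)).
have EM : \sum_(q <- s) q.1 *: tens q.2.1 q.2.2 = B^T *m N *m B.
  rewrite /N mulmx_sumr mulmx_suml; apply: eq_big_seq => q qs.
  rewrite -scalemxAr -scalemxAl; congr (_ *: _).
  have E1 : q.2.1 = q.2.1 *m P *m B by apply: Hx; rewrite mem_cat; apply/orP; left; apply/mapP; exists q.
  have E2 : q.2.2 = q.2.2 *m P *m B by apply: Hx; rewrite mem_cat; apply/orP; right; apply/mapP; exists q.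
  rewrite /tens {1}E1 {1}E2 trmx_mul !mulmxA.
  done.
have HN : N = 0.
  have H1 : (B *m A)^T *m N *m (B *m A) = 0.
    by move: H0; rewrite EM trmx_mul !mulmxA.
  have E : G^T *m ((B *m A)^T *m N *m (B *m A)) *m G
       = (B *m A *m G)^T *m N *m (B *m A *m G) by rewrite !trmx_mul !mulmxA.
  have -> : N = G^T *m ((B *m A)^T *m N *m (B *m A)) *m G.
    by rewrite E HG trmx1 mul1mx mulmx1.
  by rewrite H1 mulmx0 mul0mx.
by rewrite EM HN mulmx0 mul0mx.
Qed.
End Tens.

Section Main.
Variable K : fieldType.
Variable R : K -> Prop.
Variables (n1 n2 : nat) (h1 : hopf_data K n1) (h2 : hopf_data K n2).
Hypotheses (Hh1 : is_hopf h1) (Hh2 : is_hopf h2).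
Variables (L1 : 'rV[K]_n1 -> Prop) (L2 : 'rV[K]_n2 -> Prop).
Hypothesis HRs : subring R.
Hypothesis HK : frac_field R.
Hypotheses (HL1 : hopf_order R h1 L1) (HL2 : hopf_order R h2 L2).
Hypotheses (Hg1 : prim_gen R h1 L1) (Hg2 : prim_gen R h2 L2).
Variable (f : 'rV[K]_n1 -> 'rV[K]_n2) (A : 'M[K]_(n1, n2)).
Hypothesis HA : hopf_hom h1 h2 L1 L2 R A.
Hypothesis HAf : forall t, prim h1 L1 t -> t *m A = f t.
Hypothesis Hiso : kext_iso h1 h2 L1 L2 f.

Lemma L1sub : rsubmod R L1.
Proof. by case: HL1 => [[]]. Qed.
Lemma L1span x : kspan L1 x.
Proof. by case: HL1 => [[_ _ H _ _] _]. Qed.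

Lemma all_of (P : 'rV[K]_n1 -> Prop) : ksub P -> (forall x, L1 x -> P x) -> forall x, P x.
Proof. by move=> HP HL x; apply: (kspan_ind HP HL (L1span x)). Qed.

Lemma ksub_eq (V : lmodType K) (F G : 'rV[K]_n1 -> V) :
  (forall x y, F (x + y) = F x + F y) -> (forall c x, F (c *: x) = c *: F x) ->
  (forall x y, G (x + y) = G x + G y) -> (forall c x, G (c *: x) = c *: G x) ->
  ksub (fun x => F x = G x).
Proof.
move=> FD FZ GD GZ; split.
- have -> : (0 : 'rV[K]_n1) = (0:K) *: (0 : 'rV[K]_n1) by rewrite scale0r.
  by rewrite FZ GZ !scale0r.
- by move=> x y Hx Hy; rewrite FD GD Hx Hy.
- by move=> c x Hx; rewrite FZ GZ Hx.
Qed.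

Lemma mulA_all x y : mulv h2 (x *m A) (y *m A) = mulv h1 x y *m A.
Proof.
have H1 : forall x, L1 x -> forall y, mulv h2 (x *m A) (y *m A) = mulv h1 x y *m A.
  move=> u Hu; apply: all_of.
    apply: ksub_eq => [v w|c v|v w|c v].
    - by rewrite mulmxDl mulvDr.
    - by rewrite -scalemxAl mulvZr.
    - by rewrite mulvDr mulmxDl.
    - by rewrite mulvZr scalemxAl.
  by move=> v Hv; case: HA => _ H _ _ _; apply: H.
move: x; apply: all_of; last by move=> u Hu; apply: H1.
apply: ksub_eq => [v w|c v|v w|c v].
- by rewrite mulmxDl mulvDl.
- by rewrite -scalemxAl mulvZl.
- by rewrite mulvDl mulmxDl.
- by rewrite mulvZl scalemxAl.
Qed.

Lemma delA_all x : delv h2 (x *m A) = A^T *m delv h1 x *m A.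
Proof.
move: x; apply: all_of; last by move=> u Hu; case: HA => _ _ _ H _; apply: H.
apply: ksub_eq => [v w|c v|v w|c v].
- by rewrite mulmxDl delvD.
- by rewrite -scalemxAl delvZ.
- by rewrite delvD mulmxDr mulmxDl.
- by rewrite delvZ -scalemxAr -scalemxAl.
Qed.

Lemma epsA_all x : epsv h2 (x *m A) = epsv h1 x.
Proof.
move: x; apply: all_of; last by move=> u Hu; case: HA => _ _ _ _ H; apply: H.
split.
- by rewrite mul0mx -[0 : 'rV_n1](scale0r 0) epsvZ mul0r -[0 : 'rV_n2](scale0r 0) epsvZ mul0r.
- by move=> u v Hu Hv; rewrite mulmxDl !epsvD Hu Hv.
- by move=> c u Hu; rewrite -scalemxAl !epsvZ Hu.
Qed.

Lemma oneA : hone h1 *m A = hone h2.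
Proof. by case: HA. Qed.

Lemma hone2_neq0 : hone h2 != 0.
Proof.
apply/eqP => H0; have := epsv1 Hh2; rewrite H0.
rewrite -[0 : 'rV_n2](scale0r 0) epsvZ mul0r => /eqP; by rewrite eq_sym oner_eq0.
Qed.

Lemma Rfacts : [/\ R 0, R 1, (forall a b, R a -> R b -> R (a + b)) & (forall a b, R a -> R b -> R (a * b))].
Proof. by case: HRs. Qed.

Lemma denom x : exists d, [/\ R d, d != 0 & L1 (d *: x)].
Proof.
case: Rfacts => R0 R1 RD RM; case: L1sub => L10 L1D L1Z.
case: (L1span x) => s [Hs ->] {x}; elim: s Hs => [|q s IH] Hs.
  by exists 1; split => //; [exact: oner_neq0 | rewrite big_nil scaler0].
have [d [Rd d0 Ld]] : exists d, [/\ R d, d != 0 & L1 (d *: \sum_(q <- s) q.1 *: q.2)].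
  by apply: IH => q' q's; apply: Hs; rewrite inE q's orbT.
case: (HK q.1) => a [b [Ra Rb b0 Eq]].
exists (d * b); split; [by apply: RM | by rewrite mulf_neq0 |].
have -> : (d * b) *: \sum_(q0 <- q :: s) q0.1 *: q0.2
    = (d * a) *: q.2 + b *: (d *: \sum_(q <- s) q.1 *: q.2).
  rewrite big_cons scalerDr scalerA Eq scalerA [b * d]mulrC; congr (_ *: _ + _).
  by rewrite -mulrA [b * _]mulrC divfK.
apply: L1D; last by apply: L1Z.
by apply: L1Z; [apply: RM | apply: Hs; rewrite inE eqxx].
Qed.

Lemma prim0 x : primK h1 x -> x *m A = 0 -> x = 0.
Proof.
move=> Px H0; case: (denom x) => d [Rd d0 Ld].
have Pd : prim h1 L1 (d *: x).
  by split => //; rewrite delvZ Px scalerDr tensZl tensZr.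
have fd : f (d *: x) = 0 by rewrite -HAf // -scalemxAl H0 scaler0.
case: Hiso => H _.
have := H [:: (1, d *: x)].
rewrite !big_cons !big_nil !scale1r !addr0 => H1.
have : d *: x = 0 by apply: H1 => // q; rewrite inE => /eqP ->.
by move/eqP; rewrite scaler_eq0 (negbTE d0) => /eqP.
Qed.

Lemma tensA (u v : 'rV[K]_n1) : A^T *m tens u v *m A = tens (u *m A) (v *m A).
Proof. by rewrite /tens trmx_mul !mulmxA. Qed.

Lemma delv0 (m : nat) (h : hopf_data K m) : delv h 0 = 0.
Proof. by rewrite -[0 : 'rV_m](scale0r 0) delvZ scale0r. Qed.

Lemma inj_Fsp m x : Fsp h1 m x -> x *m A = 0 -> x = 0.
Proof.
elim: m x => [|m IH] x /=.
  move=> [c ->]; rewrite -scalemxAl oneA => /eqP.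
  by rewrite scaler_eq0 (negbTE hone2_neq0) orbF => /eqP ->; rewrite scale0r.
move=> Hx H0; have Hd := dbar_Fsp Hh1 Hx.
have Hz : A^T *m dbar h1 x *m A = 0.
  rewrite /dbar !mulmxBr !mulmxBl -delA_all !tensA H0 oneA delv0.
  by rewrite /tens trmx0 !mul0mx mulmx0 !subr0.
have Dz := tens_inj (Fsp_sub h1 m) IH Hd Hz.
apply: prim0 => //; move: Dz; rewrite /dbar /primK -addrA -opprD => /eqP.
by rewrite subr_eq0 => /eqP.
Qed.

Lemma Fsp_all x : exists m, Fsp h1 m x.
Proof.
pose S y := exists m, Fsp h1 m y.
have SS : ksub S.
  split.
  - by exists 0%N; exists 0; rewrite scale0r.
  - move=> u v [a Ha] [b Hb]; exists (maxn a b).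
    case: (Fsp_sub h1 (maxn a b)) => _ PD _; apply: PD.
      by apply: (Fsp_le (leq_maxl a b)).
    by apply: (Fsp_le (leq_maxr a b)).
  - by move=> c u [a Ha]; exists a; case: (Fsp_sub h1 a) => _ _ PZ; apply: PZ.
have : forall y, L1 y -> S y.
  apply: Hg1.
    case: SS => S0 SD SZ; split.
    - by split => // r u _; apply: SZ.
    - by exists 0%N; exists 1; rewrite scale1r.
    - by move=> u v [a Ha] [b Hb]; exists (a + b)%N; apply: Fsp_mul.
  by move=> t [_ Pt]; exists 1%N; apply: Fsp_prim.
by move=> HL; apply: (all_of SS HL).
Qed.

Lemma inj_all (x : 'rV[K]_n1) : x *m A = 0 -> x = 0.
Proof. by case: (Fsp_all x) => m Hm; apply: inj_Fsp Hm. Qed.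

Lemma A_free : row_free A.
Proof.
rewrite -kermx_eq0; apply/eqP/row_matrixP => i; rewrite row0.
by apply: inj_all; rewrite -row_mul mulmx_ker row0.
Qed.

Lemma surj_all (y : 'rV[K]_n2) : exists x, y = x *m A.
Proof.
pose S (v : 'rV[K]_n2) := exists x, v = x *m A.
have SS : ksub S.
  split.
  - by exists 0; rewrite mul0mx.
  - by move=> u v [a ->] [b ->]; exists (a + b); rewrite mulmxDl.
  - by move=> c u [a ->]; exists (c *: a); rewrite scalemxAl.
have : forall v, L2 v -> S v.
  apply: Hg2.
    case: SS => S0 SD SZ; split.
    - by split => // r u _; apply: SZ.
    - by exists (hone h1); rewrite oneA.
    - by move=> u v [a ->] [b ->]; exists (mulv h1 a b); rewrite mulA_all.
  move=> t Pt; case: Hiso => _ H.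
  case: (H t (kspan_gen Pt)) => s [Hs ->].
  exists (\sum_(q <- s) q.1 *: q.2); rewrite mulmx_suml.
  by apply: eq_big_seq => q qs; rewrite -scalemxAl HAf //; apply: Hs.
move=> HL; case: HL2 => [[_ _ Hsp _ _] _].
exact: (kspan_ind SS HL (Hsp y)).
Qed.

Definition conv (phi psi : 'rV[K]_n1 -> 'rV[K]_n2) (x : 'rV[K]_n1) : 'rV[K]_n2 :=
  \sum_(i < n1) \sum_(j < n1) delv h1 x i j *: mulv h2 (phi (ev K i)) (psi (ev K j)).

Lemma conv_ext phi phi' psi psi' x :
  (forall i, phi (ev K i) = phi' (ev K i)) -> (forall j, psi (ev K j) = psi' (ev K j)) ->
  conv phi psi x = conv phi' psi' x.
Proof.
move=> H1 H2; apply: eq_bigr => i _; apply: eq_bigr => j _.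
by rewrite H1 H2.
Qed.

Lemma conv_r1 (C : 'M[K]_(n1, n2)) x :
  conv (fun y => y *m C) (fun y => epsv h1 y *: hone h2) x = x *m C.
Proof.
rewrite /conv delv_expand.
transitivity (\sum_(k < n1) x 0 k *: (ev K k *m C)).
  apply: eq_bigr => k _; congr (_ *: _).
  transitivity (\sum_(i < n1) (\sum_(j < n1) hdel h1 k i j * heps h1 j) *: (ev K i *m C)).
    apply: eq_bigr => i _; rewrite scaler_suml; apply: eq_bigr => j _.
    by rewrite epsv_ev mulvZr (mulv1 Hh2) scalerA.
  under eq_bigr => i _ do rewrite (counit_r Hh1).
  rewrite (bigD1 k) //= eqxx scale1r big1 ?addr0 // => i /negbTE ki.
  by rewrite eq_sym ki scale0r.
by rewrite {2}(row_ev x) mulmx_suml; apply: eq_bigr => k _; rewrite scalemxAl.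
Qed.

Lemma conv_l1 (C : 'M[K]_(n1, n2)) x :
  conv (fun y => epsv h1 y *: hone h2) (fun y => y *m C) x = x *m C.
Proof.
rewrite /conv delv_expand.
transitivity (\sum_(k < n1) x 0 k *: (ev K k *m C)).
  apply: eq_bigr => k _; congr (_ *: _).
  transitivity (\sum_(j < n1) (\sum_(i < n1) hdel h1 k i j * heps h1 i) *: (ev K j *m C)).
    rewrite exchange_big /=.
    apply: eq_bigr => j _; rewrite scaler_suml; apply: eq_bigr => i _.
    by rewrite epsv_ev mulvZl (mul1v Hh2) scalerA.
  under eq_bigr => j _ do rewrite (counit_l Hh1).
  rewrite (bigD1 k) //= eqxx scale1r big1 ?addr0 // => i /negbTE ki.
  by rewrite eq_sym ki scale0r.
by rewrite {2}(row_ev x) mulmx_suml; apply: eq_bigr => k _; rewrite scalemxAl.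
Qed.

Lemma reorder4 (V : nmodType) (F : 'I_n1 -> 'I_n1 -> 'I_n1 -> 'I_n1 -> V) :
  \sum_(i < n1) \sum_(j < n1) \sum_(a < n1) \sum_(b < n1) F i j a b
  = \sum_(a < n1) \sum_(b < n1) \sum_(j < n1) \sum_(i < n1) F i j a b.
Proof.
rewrite exchange_big /=.
under eq_bigr => j _ do rewrite exchange_big /=.
under eq_bigr => j _ do under eq_bigr => a _ do rewrite exchange_big /=.
rewrite exchange_big /=.
by under eq_bigr => a _ do rewrite exchange_big /=.
Qed.

Lemma reorder3 (V : nmodType) (F : 'I_n1 -> 'I_n1 -> 'I_n1 -> 'I_n1 -> V) :
  \sum_(i < n1) \sum_(j < n1) \sum_(c < n1) \sum_(d < n1) F i j c d
  = \sum_(i < n1) \sum_(c < n1) \sum_(d < n1) \sum_(j < n1) F i j c d.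
Proof.
apply: eq_bigr => i _; rewrite exchange_big /=.
by under eq_bigr => c _ do rewrite exchange_big /=.
Qed.

Lemma conv_assoc phi psi chi x :
  conv (conv phi psi) chi x = conv phi (conv psi chi) x.
Proof.
rewrite /conv delv_expand [in RHS]delv_expand; apply: eq_bigr => k _; congr (_ *: _).
pose T a b c := mulv h2 (mulv h2 (phi (ev K a)) (psi (ev K b))) (chi (ev K c)).
transitivity (\sum_(a < n1) \sum_(b < n1) \sum_(c < n1)
                (\sum_(i < n1) hdel h1 k i c * hdel h1 i a b) *: T a b c).
  transitivity (\sum_(i < n1) \sum_(j < n1) \sum_(a < n1) \sum_(b < n1)
                 (hdel h1 k i j * hdel h1 i a b) *: T a b j).
    apply: eq_bigr => i _; apply: eq_bigr => j _; rewrite delv_ev mulv_suml scaler_sumr.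
    apply: eq_bigr => a _; rewrite mulv_suml scaler_sumr; apply: eq_bigr => b _.
    by rewrite mulvZl scalerA.
  rewrite reorder4; apply: eq_bigr => a _; apply: eq_bigr => b _; apply: eq_bigr => c _.
  by rewrite scaler_suml.
symmetry.
transitivity (\sum_(a < n1) \sum_(b < n1) \sum_(c < n1)
                (\sum_(j < n1) hdel h1 k a j * hdel h1 j b c) *: T a b c).
  transitivity (\sum_(i < n1) \sum_(j < n1) \sum_(c < n1) \sum_(d < n1)
                 (hdel h1 k i j * hdel h1 j c d) *: T i c d).
    apply: eq_bigr => i _; apply: eq_bigr => j _; rewrite delv_ev mulv_sumr scaler_sumr.
    apply: eq_bigr => c _; rewrite mulv_sumr scaler_sumr; apply: eq_bigr => d _.
    by rewrite mulvZr scalerA /T (mulvA Hh2).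
  rewrite reorder3; apply: eq_bigr => a _; apply: eq_bigr => b _; apply: eq_bigr => c _.
  by rewrite scaler_suml.
apply: eq_bigr => a _; apply: eq_bigr => b _; apply: eq_bigr => c _.
by case: Hh1 => [[_ _ _ H _] _]; rewrite H.
Qed.

Lemma bil_expand (u v : 'rV[K]_n2) :
  mulv h2 (antv h2 u) v
  = \sum_(k < n2) \sum_(l < n2) (u 0 k * v 0 l) *: mulv h2 (antv h2 (ev K k)) (ev K l).
Proof.
rewrite {1}[u]row_ev {1}[v]row_ev /antv mulmx_suml mulv_suml; apply: eq_bigr => k _.
rewrite -scalemxAl mulvZl mulv_sumr scaler_sumr; apply: eq_bigr => l _.
by rewrite mulvZr scalerA.
Qed.

Lemma evA (i : 'I_n1) k : (ev K i *m A) 0 k = A i k.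
Proof. by rewrite /ev -rowE mxE. Qed.

Lemma conv_C1 x :
  conv (fun y => y *m (A *m hant h2)) (fun y => y *m A) x = epsv h1 x *: hone h2.
Proof.
rewrite -epsA_all -(anti_l Hh2).
transitivity (\sum_(i < n1) \sum_(j < n1) \sum_(k < n2) \sum_(l < n2)
   (delv h1 x i j * (A i k * A j l)) *: mulv h2 (antv h2 (ev K k)) (ev K l)).
  apply: eq_bigr => i _; apply: eq_bigr => j _.
  rewrite mulmxA -/(antv h2 _) bil_expand scaler_sumr; apply: eq_bigr => k _.
  rewrite scaler_sumr; apply: eq_bigr => l _.
  by rewrite !evA scalerA.
rewrite exchange_big /=.
under eq_bigr => j _ do rewrite exchange_big /=.
under eq_bigr => j _ do under eq_bigr => k _ do rewrite exchange_big /=.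
rewrite exchange_big /=.
under eq_bigr => k _ do rewrite exchange_big /=.
apply: eq_bigr => k _; apply: eq_bigr => l _.
under eq_bigr => j _ do rewrite -scaler_suml.
rewrite -scaler_suml delA_all; congr (_ *: _).
rewrite mxE; apply: eq_bigr => j _.
rewrite !mxE mulr_suml; apply: eq_bigr => i _.
by rewrite !mxE mulrA [delv h1 x i j * A i k]mulrC.
Qed.

Lemma conv_C2 x :
  conv (fun y => y *m A) (fun y => y *m (hant h1 *m A)) x = epsv h1 x *: hone h2.
Proof.
rewrite /conv.
transitivity ((\sum_(i < n1) \sum_(j < n1) delv h1 x i j *: mulv h1 (ev K i) (antv h1 (ev K j))) *m A).
  rewrite mulmx_suml; apply: eq_bigr => i _; rewrite mulmx_suml; apply: eq_bigr => j _.
  by rewrite mulmxA -/(antv h1 _) mulA_all scalemxAl.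
by rewrite (anti_r Hh1) -scalemxAl oneA.
Qed.

Lemma antA x : antv h2 (x *m A) = antv h1 x *m A.
Proof.
set phi1 := fun y : 'rV[K]_n1 => y *m (A *m hant h2).
set phi2 := fun y : 'rV[K]_n1 => y *m (hant h1 *m A).
set A' := fun y : 'rV[K]_n1 => y *m A.
set u := fun y : 'rV[K]_n1 => epsv h1 y *: hone h2.
have e1 : phi1 x = antv h2 (x *m A) by rewrite /phi1 /antv mulmxA.
have e2 : phi2 x = antv h1 x *m A by rewrite /phi2 /antv mulmxA.
have s1 : phi1 x = conv phi1 u x by symmetry; exact: (conv_r1 (A *m hant h2) x).
rewrite -e1 -e2 s1.
rewrite (@conv_ext phi1 phi1 u (conv A' phi2)) //; last by move=> j; rewrite conv_C2.
rewrite -conv_assoc.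
rewrite (@conv_ext (conv phi1 A') u phi2 phi2) //; last by move=> i; rewrite conv_C1.
exact: (conv_l1 (hant h1 *m A) x).
Qed.

Lemma nth_mapA (s : seq 'rV[K]_n1) i : nth 0 [seq y *m A | y <- s] i = nth 0 s i *m A.
Proof.
elim: s i => [|y s IH] [|i] //=; by rewrite mul0mx.
Qed.

Lemma img_order : hopf_order R h2 (fun y => exists2 x, L1 x & y = x *m A).
Proof.
case: HL1 => [[[L10 L1D L1Z] Hfg Hsp L1one L1mul] [L1eps L1ant L1del]].
case/row_freeP: A_free => Ai HAi.
have back : forall y, (exists2 x, L1 x & y = x *m A) -> L1 (y *m Ai) /\ y = (y *m Ai) *m A.
  by move=> y [x Hx ->]; rewrite -mulmxA HAi mulmx1.
split; split.
- split.
  + by exists 0; rewrite ?mul0mx.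
  + by move=> y z [x Hx ->] [x' Hx' ->]; exists (x + x'); [apply: L1D | rewrite mulmxDl].
  + by move=> r y Rr [x Hx ->]; exists (r *: x); [apply: L1Z | rewrite scalemxAl].
- case: Hfg => [[s [Hs Hgen]] [m [a [b [[Ha1 Ha2 Ha3 Hb1] [Hb2 Hb3 Hba]]]]]].
  split.
    exists [seq y *m A | y <- s]; split.
      by move=> y /mapP [x xs ->]; exists x => //; apply: Hs.
    move=> y [x Hx ->]; case: (Hgen x Hx) => r [Hr Ex].
    rewrite size_map; exists r; split => //.
    rewrite Ex mulmx_suml; apply: eq_bigr => i _.
    by rewrite nth_mapA scalemxAl.
  exists m, (fun y => a (y *m Ai)), (fun u => b u *m A); split; split.
  + by move=> y Hy i; case: (back y Hy) => Hl _; apply: Ha1.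
  + move=> y z Hy Hz; rewrite mulmxDl; apply: Ha2.
      by case: (back y Hy).
    by case: (back z Hz).
  + move=> r y Rr Hy; rewrite -scalemxAl; apply: Ha3 => //.
    by case: (back y Hy).
  + by move=> u Hu; exists (b u) => //; apply: Hb1.
  + by move=> u w Hu Hw; rewrite Hb2 // mulmxDl.
  + by move=> r u Rr Hu; rewrite Hb3 // scalemxAl.
  + by move=> y Hy; case: (back y Hy) => Hl E; rewrite Hba // -E.
- move=> v; case: (surj_all v) => x ->; case: (Hsp x) => s [Hs ->].
  exists [seq (q.1, q.2 *m A) | q <- s]; split.
    by move=> q /mapP [q' q's ->] /=; exists q'.2 => //; apply: Hs.
  rewrite big_map mulmx_suml; apply: eq_bigr => q _.
  by rewrite scalemxAl.
- by exists (hone h1) => //; rewrite oneA.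
- move=> y z [x Hx ->] [x' Hx' ->]; exists (mulv h1 x x'); first by apply: L1mul.
  by rewrite mulA_all.
- by move=> y [x Hx ->]; rewrite epsA_all; apply: L1eps.
- by move=> y [x Hx ->]; exists (antv h1 x); [apply: L1ant | rewrite antA].
- move=> y [x Hx ->]; rewrite delA_all; case: (L1del x Hx) => s [Hs ->].
  exists [seq (q.1, (q.2.1 *m A, q.2.2 *m A)) | q <- s]; split.
    move=> q /mapP [q' q's ->] /=; case: (Hs q' q's) => R1 Lu Lv.
    by split => //; [exists q'.2.1 | exists q'.2.2].
  rewrite big_map mulmx_sumr mulmx_suml; apply: eq_bigr => q _.
  by rewrite -scalemxAr -scalemxAl tensA.
Qed.

End Main.

Unset Implicit Arguments.

Theorem lemma3p4 (K : fieldType) (R : K -> Prop) (p : nat)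
  (HR : dedekind R) (HK : frac_field R) (Hp : prime p) (HpK : p \in [pchar K])
  (n1 n2 : nat) (h1 : hopf_data K n1) (h2 : hopf_data K n2)
  (Hh1 : is_hopf h1) (Hh2 : is_hopf h2)
  (Hn1 : exists k, n1 = (p ^ k)%N) (Hn2 : exists k, n2 = (p ^ k)%N)
  (L1 : 'rV[K]_n1 -> Prop) (L2 : 'rV[K]_n2 -> Prop)
  (HL1 : hopf_order R h1 L1) (HL2 : hopf_order R h2 L2)
  (Hg1 : prim_gen R h1 L1) (Hg2 : prim_gen R h2 L2)
  (f : 'rV[K]_n1 -> 'rV[K]_n2) (Hf : RF_hom h1 h2 L1 L2 R p f)
  (A : 'M[K]_(n1, n2)) (HA : hopf_hom h1 h2 L1 L2 R A)
  (HAf : forall t, prim h1 L1 t -> t *m A = f t)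
  (Hiso : kext_iso h1 h2 L1 L2 f) :
  hopf_order R h2 (fun y => exists2 x, L1 x & y = x *m A) /\ hopf_order R h2 L2.
Proof.
have HRs : subring R by case: HR.
split; last exact: HL2.
by apply: (img_order Hh1 Hh2 HRs HK HL1 HL2 Hg1 Hg2 HA HAf Hiso).
Qed.
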